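(* For every integer $n\ge 2$, the $n$-abomination $\mathbb{X}_n$ is an Esakia space.
   Context: $\mathbb{N}=\{0,1,2,\dots\}$. Fix an integer $n\ge 2$ and put $N=2^{n+1}-1$. Let $T_n$ be the set of triples $\langle k_1,k_2,k_3\rangle$ of pairwise distinct natural numbers $\le N$, with a fixed enumeration $T_n=\{s_0,\dots,s_t\}$. Let $U_n$ be a set of pairwise distinct elements $a_m,b_m$ ($m\in\mathbb{N}$) and $c_{m,k},d_{m,k},e^a_{m,k},e^b_{m,k}$ ($m\in\mathbb{N}$, $0\le k\le N$). Define $x\prec y$ on $U_n$ iff one of: (1) $x=a_m$ and $y\in\{c_{m,k_1},c_{m,k_2}\}$, where $s_j=\langle k_1,k_2,k_3\rangle$ with $j\equiv m \bmod (t+1)$; (2) $x=b_m$ and $y\in\{c_{m,k_1},c_{m,k_3}\}$, with $s_j$ as in (1); (3) $m\ge1$, $x=c_{m,k}$, and either $y=e^a_{m-1,j}$ with $j\ne k$, or $y=e^b_{m-1,i}$ for any $i\le N$; (4) $x=d_{m,k}$ and $y=c_{m,j}$ with $j\neq k$; (5) $x=e^a_{m,k}$ and either $y=a_m$ or $y=d_{m,j}$ with $j\ne k$; (6) $x=e^b_{m,k}$ and either $y=b_m$ or $y=d_{m,j}$ with $j\ne k$. Let $\le$ be the reflexive transitive closure of $\prec$ (a partial order on $U_n$). The root compactification of a poset is obtained by adding a new least element $\bot$ and declaring a set $U$ open iff $\bot\notin U$ or $U$ is cofinite. The $n$-abomination $\mathbb{X}_n$ is the root compactification of $\langle U_n,\le\rangle$.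 An Esakia space is a compact ordered topological space in which ${\downarrow}U$ is clopen for every clopen $U$ and whenever $x\not\le y$ there is a clopen upset containing $x$ but not $y$. *)

(* Defs.v *)
From Stdlib Require Import Relations.
From HB Require Import structures.
From mathcomp Require Import all_boot all_order.
From mathcomp Require Import boolp classical_sets cardinality topology.
Set Implicit Arguments. Unset Strict Implicit. Unset Printing Implicit Defensive.
Local Open Scope classical_set_scope.

Section Esakia.
Variable X : topologicalType.
Variable le : X -> X -> Prop.

Definition upset (U : set X) := forall x y, U x -> le x y -> U y.
Definition downclosure (U : set X) : set X := [set x | exists2 y, U y & le x y].

Definition is_partial_order :=
  [/\ forall x, le x x,
      forall x y z, le x y -> le y z -> le x z &
      forall x y, le x y -> le y x -> x = y].

Definition esakia_space :=
  [/\ is_partial_order,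
      compact [set: X],
      forall U : set X, clopen U -> clopen (downclosure U) &
      forall x y, ~ le x y ->
        exists U : set X, [/\ clopen U, upset U, U x & ~ U y]].
End Esakia.

(* carrier: option P, with None playing the role of the new least element bot *)
Definition rootc (P : Type) := option P.

Section RootCompactification.
Variable P : Type.

HB.instance Definition _ := gen_eqMixin (rootc P).
HB.instance Definition _ := gen_choiceMixin (rootc P).

Definition rootc_open (U : set (rootc P)) : Prop :=
  ~ U None \/ finite_set (~` U).

Lemma rootc_openT : rootc_open setT.
Proof. by right; rewrite setCT; exact: finite_set0. Qed.

Lemma rootc_openI : setI_closed rootc_open.
Proof.
move=> A B [nA|fA] [nB|fB].
- by left=> -[].
- by left=> -[].
- by left=> -[].
- by right; rewrite setCI finite_setU.
Qed.

Lemma rootc_open_bigU (I : Type) (f : I -> set (rootc P)) :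
  (forall i, rootc_open (f i)) -> rootc_open (\bigcup_i f i).
Proof.
move=> hf; have [[i _ fi]|nU] := pselect ((\bigcup_i f i) None).
- case: (hf i) => [//|fin]; right; apply: sub_finite_set fin.
  by apply: subsetC => x fx; exists i.
- by left.
Qed.

HB.instance Definition _ := isOpenTopological.Build (rootc P)
  rootc_openT rootc_openI rootc_open_bigU.

Variable leP : P -> P -> Prop.
Definition rootc_le (x y : rootc P) : Prop :=
  match x, y with
  | None, _ => True
  | Some _, None => False
  | Some a, Some b => leP a b
  end.
End RootCompactification.

(* indices k with 0 <= k <= N = 2^(n+1)-1, i.e. k : 'I_(2^(n+1)) *)
Definition Nbound (n : nat) := (2 ^ n.+1).-1.

Inductive Uel (n : nat) : Type :=
  | Ua of nat
  | Ub of nat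
  | Uc of nat & 'I_(2 ^ n.+1)
  | Ud of nat & 'I_(2 ^ n.+1)
  | Uea of nat & 'I_(2 ^ n.+1)
  | Ueb of nat & 'I_(2 ^ n.+1).

Definition in_Tn (n : nat) (t : nat * nat * nat) : bool :=
  let: (k1, k2, k3) := t in
  [&& k1 <= Nbound n, k2 <= Nbound n, k3 <= Nbound n,
      k1 != k2, k1 != k3 & k2 != k3].

(* an enumeration s_0, ..., s_t of T_n (t + 1 = size s) *)
Definition enumeration_Tn (n : nat) (s : seq (nat * nat * nat)) : Prop :=
  uniq s /\ forall x, (x \in s) = in_Tn n x.

Section Order.
Variables (n : nat) (s : seq (nat * nat * nat)).

Definition sj (m : nat) := nth (0, 0, 0) s (m %% size s).

Definition prec (x y : Uel n) : Prop :=
  match x, y with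
  | Ua m, Uc m' k => m' = m /\
      let: (k1, k2, _) := sj m in (val k = k1 \/ val k = k2)
  | Ub m, Uc m' k => m' = m /\
      let: (k1, _, k3) := sj m in (val k = k1 \/ val k = k3)
  | Uc m k, Uea m' j => 1 <= m /\ m' = m.-1 /\ j <> k
  | Uc m k, Ueb m' i => 1 <= m /\ m' = m.-1
  | Ud m k, Uc m' j => m' = m /\ j <> k
  | Uea m k, Ua m' => m' = m
  | Uea m k, Ud m' j => m' = m /\ j <> k
  | Ueb m k, Ub m' => m' = m
  | Ueb m k, Ud m' j => m' = m /\ j <> k
  | _, _ => False
  end.

Definition Ule : Uel n -> Uel n -> Prop := clos_refl_trans (Uel n) prec.
End Order.

Definition abomination (n : nat) := rootc (Uel n).
Definition abomination_le (n : nat) (s : seq (nat * nat * nat)) :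
  abomination n -> abomination n -> Prop := rootc_le (@Ule n s).

(* Main.v *)
Require Import Defs.
From mathcomp Require Import all_boot all_order.
From mathcomp Require Import boolp classical_sets cardinality topology.
From Stdlib Require Import Relations Lia.
From mathcomp Require Import zify.
Local Open Scope classical_set_scope.

Ltac stp := apply: rt_step; simpl; repeat split; try done; by apply: nesym.

Section Comb.
Variables (n : nat) (s : seq (nat * nat * nat)).
Hypothesis Hs : enumeration_Tn n s.

Definition lvl (x : Uel n) : nat :=
  match x with Ua m | Ub m => m | Uc m _ | Ud m _ | Uea m _ | Ueb m _ => m end.
Definition phi (x : Uel n) : nat :=
  match x with Ua m | Ub m | Ud m _ => 4*m+2 | Uc m _ => 4*m+1
  | Uea m _ | Ueb m _ => 4*m+3 end.

Lemma lvl_phi x : lvl x <= phi x.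
Proof. case: x => /= *; lia. Qed.

Lemma prec_phi x y : prec s x y -> phi y < phi x.
Proof.
case: x => [m|m|m k|m k|m k|m k]; case: y => [m'|m'|m' k'|m' k'|m' k'|m' k'] //=;
  move=> H; repeat match goal with H : _ /\ _ |- _ => destruct H end; subst; lia.
Qed.

Lemma Ule_phi x y : Ule s x y -> x = y \/ phi y < phi x.
Proof.
elim=> [a b /prec_phi|a|a b c _ h1 _ h2]; auto.
case: h1 => [e1|h1]; case: h2 => [e2|h2]; subst; auto; right; lia.
Qed.

Lemma other (k : 'I_(2^n.+1)) : exists j : 'I_(2^n.+1), j <> k.
Proof.
have h1 : 1 < 2^n.+1 by rewrite -[1]/(2^0) ltn_exp2l.
have h0 : 0 < 2^n.+1 by lia.
case: (eqVneq (val k) 0) => hk.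
- by exists (Ordinal h1) => e; rewrite -e in hk.
- by exists (Ordinal h0) => e; rewrite -e in hk.
Qed.

Lemma sj_bound m : let: (k1, k2, k3) := sj s m in
  [/\ k1 < 2^n.+1, k2 < 2^n.+1 & k3 < 2^n.+1].
Proof.
have h0 : 0 < 2^n.+1 by rewrite expn_gt0.
case: (ltnP 0 (size s)) => hs.
- have : sj s m \in s by rewrite /sj mem_nth // ltn_pmod.
  rewrite (proj2 Hs) /in_Tn /Nbound.
  case: (sj s m) => [[k1 k2] k3] /and5P [a b c _ _]; split; lia.
- have -> : s = [::] by case: s hs.
  by rewrite /sj nth_nil.
Qed.

Lemma lemA y : exists k, Ule s y (Uc (lvl y) k).
Proof.
have hA m : exists k, Ule s (Ua n m) (Uc m k).
  have := sj_bound m; case E: (sj s m) => [[k1 k2] k3] [h1 h2 h3].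
  exists (Ordinal h1); apply: rt_step => /=; rewrite E; split=> //; by left.
have hB m : exists k, Ule s (Ub n m) (Uc m k).
  have := sj_bound m; case E: (sj s m) => [[k1 k2] k3] [h1 h2 h3].
  exists (Ordinal h1); apply: rt_step => /=; rewrite E; split=> //; by left.
case: y => [m|m|m k|m k|m k|m k] /=.
- exact: hA.
- exact: hB.
- by exists k; apply: rt_refl.
- have [j hj] := other k; exists j; apply: rt_step => /=; split=> //.
- have [k' hk] := hA m; exists k'; apply: rt_trans hk; apply: rt_step => /=. done.
- have [k' hk] := hB m; exists k'; apply: rt_trans hk; apply: rt_step => /=. done.
Qed.

Lemma lemB m (k k' : 'I_(2^n.+1)) : Ule s (Uc m.+1 k') (Uc m k).
Proof.
have [j hj] := other k; have [i hi] := other j.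
apply: (@rt_trans _ _ _ (Ueb m i)); first by apply: rt_step.
apply: (@rt_trans _ _ _ (Ud m j)); apply: rt_step; split; try reflexivity; by apply: nesym.
Qed.

Lemma lemC d : forall m (k k' : 'I_(2^n.+1)), Ule s (Uc (d + m).+1 k') (Uc m k).
Proof.
elim: d => [|d IH] m k k'; first exact: lemB.
rewrite addSnnS; apply: rt_trans (IH m.+1 k k') _; exact: lemB.
Qed.

Lemma lemP y m (k : 'I_(2^n.+1)) : m < lvl y -> Ule s y (Uc m k).
Proof.
move=> hm; have [k0 h] := lemA y; apply: rt_trans h _.
have -> : lvl y = ((lvl y - m.+1) + m).+1 by lia.
exact: lemC.
Qed.

Lemma lemD u : exists k, Ule s (Uc (lvl u).+1 k) u.
Proof.
have h0 : 0 < 2^n.+1 by rewrite expn_gt0.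
pose o := Ordinal h0.
case: u => [m|m|m k|m k|m k|m k] /=.
- have [i hi] := other o; exists o.
  apply: (@rt_trans _ _ _ (Uea m i)); stp.
- exists o; apply: (@rt_trans _ _ _ (Ueb m o)); stp.
- exists o; exact: lemB.
- have [i hi] := other k; exists o.
  apply: (@rt_trans _ _ _ (Ueb m i)); stp.
- have [j hj] := other k; exists j; stp.
- exists o; stp.
Qed.

Lemma lemDown u y : (lvl u).+1 < lvl y -> Ule s y u.
Proof.
move=> h; have [k hk] := lemD u; apply: rt_trans hk; exact: lemP.
Qed.

Lemma fin_lvl L :
  finite_set [set p : abomination n | exists x, p = Some x /\ lvl x <= L].
Proof.
have h0 : 0 < 2^n.+1 by rewrite expn_gt0.
pose f := fun t : 'I_L.+1 * 'I_6 * 'I_(2^n.+1) =>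
  let: (m, t, k) := t in Some (match val t with 0 => Ua n m | 1 => Ub n m
    | 2 => Uc m k | 3 => Ud m k | 4 => Uea m k | _ => Ueb m k end) : abomination n.
apply: (@sub_finite_set _ _ (f @` setT)); last exact/finite_image/finite_finset.
move=> p [x [-> hx]].
have hm : lvl x < L.+1 by lia.
case: x hx hm => [m|m|m k|m k|m k|m k] /= _ hm.
- by exists (Ordinal hm, @Ordinal 6 0 isT, Ordinal h0).
- by exists (Ordinal hm, @Ordinal 6 1 isT, Ordinal h0).
- by exists (Ordinal hm, @Ordinal 6 2 isT, k).
- by exists (Ordinal hm, @Ordinal 6 3 isT, k).
- by exists (Ordinal hm, @Ordinal 6 4 isT, k).
- by exists (Ordinal hm, @Ordinal 6 5 isT, k).
Qed.
End Comb.

Lemma rootc_compact n : compact [set: abomination n].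
Proof.
move=> F PF _.
case: (pselect (cluster F None)) => [cl|ncl]; first by exists None.
have : ~ (forall A B, F A -> nbhs (None : abomination n) B -> A `&` B !=set0) by [].
move=> /existsNP [A /existsNP [B /not_implyP [FA /not_implyP [nB nAB]]]].
move: nB; rewrite nbhsE => -[C [oC CN] CB].
case: oC => [//|finC].
have FC : F (~` C).
  apply: filterS FA => x Ax Cx; apply: nAB; exists x; split => //; exact: CB.
have [x [_ clx]] := finite_compact finC PF FC.
by exists x.
Qed.

Theorem mainTheorem4 (n : nat) (s : seq (nat * nat * nat)) :
  2 <= n -> enumeration_Tn n s ->
  esakia_space (@abomination_le n s).
Proof.
move=> _ Hs; split.
- split.
  + by case=> //= x; apply: rt_refl.
  + by case=> [x|] [y|] [z|] //=; apply: rt_trans.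
  + case=> [x|] [y|] //= h1 h2; congr Some.
    case: (@Ule_phi _ _ _ _ h1) => // p1; case: (@Ule_phi _ _ _ _ h2) => // p2; lia.
- exact: rootc_compact.
- move=> U [oU cU].
  case: (pselect (U !=set0)) => [[y Uy]|U0]; last first.
    have -> : downclosure (@abomination_le n s) U = set0.
      by apply/seteqP; split => // x [z Uz _]; apply: U0; exists z.
    exact: clopen0.
  set D := downclosure _ U.
  have DN : D None by exists y.
  have finD : finite_set (~` D).
    case: y Uy => [u|] Uy.
    + move: (fin_lvl n (lvl n u).+1); apply: sub_finite_set.
      case=> [x|] /= nD; last by [].
      exists x; split => //; rewrite leqNgt; apply/negP => h.
      by apply: nD; exists (Some u) => //=; exact: (@lemDown n s Hs).
    + case: oU => [//|finU]; move: finU; apply: sub_finite_set.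
      move=> x nD Ux; apply: nD; exists x => //.
      by case: x Ux => //= x _; apply: rt_refl.
  split; first by right.
  by rewrite -openC; left.
- case=> [a|] [b|] //= nab.
  + exists (fun p => match p with Some z => Ule s a z | None => False end).
    split => //; [|by case=> [x|] [y|] //= h1 h2; apply: rt_trans h1 h2|exact: rt_refl].
    split; first by left.
    rewrite -openC; right; rewrite setCK.
    move: (fin_lvl n (phi n a)); apply: sub_finite_set.
    case=> [z|] //= h; exists z; split => //.
    case: (@Ule_phi _ _ _ _ h) => [->|p]; first exact: (@lvl_phi n).
    have := @lvl_phi n z; lia.
  + exists (fun p => match p with Some z => Ule s a z | None => False end).
    split => //; [|by case=> [x|] [y|] //= h1 h2; apply: rt_trans h1 h2|exact: rt_refl].
    split; first by left.
    rewrite -openC; right; rewrite setCK.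
    move: (fin_lvl n (phi n a)); apply: sub_finite_set.
    case=> [z|] //= h; exists z; split => //.
    case: (@Ule_phi _ _ _ _ h) => [->|p]; first exact: (@lvl_phi n).
    have := @lvl_phi n z; lia.
Qed.
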